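(* Under the standing assumptions, $\sum_{n\eta_3\le S\le n}\Phi(S)=o(1)$ as $n\to\infty$, the sum being over integers $S$.
   Context: Parameters: integer $k\ge2$, constants $\alpha>0$, $r>0$, $0<p<1$; $d=n^{\alpha}$ (treated as an integer), $m=n\ln d$, $\tau=\frac1{1-p}$, $r_{cr}=\frac1{\ln\tau}$. Standing assumptions: $(2k-1)\alpha>1$, $k\alpha\le1$, $k\ge\frac{\tau\ln\tau}{\tau-1}$, and $r<r_{cr}$. Notation: $f(s)=1+\frac{p}{1-p}\cdot\frac{s^k-d^{-k}}{1-d^{-k}}$ for $s\in[0,1]$; $B(S)=\binom{n}{S}\left(\frac1d\right)^{S}\left(1-\frac1d\right)^{n-S}$; $W(S)=f(S/n)^{rm}$; $\Phi(S)=B(S)W(S)$. Let $\alpha_0=\frac{(2k-1)\alpha-1}{2(k-1)}$, and let $\eta_2,\eta_3,\mu$ be constants with $0<\eta_2<\eta_3<1$, $\alpha_0/\alpha-\mu\eta_2^{k-1}>0$, $\mu>\frac{kpr}{1-p}$, and $r\ln(1-p)+\eta_3>0$. *)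

(* Defs.v *)
From mathcomp Require Import all_boot all_order all_algebra.
From mathcomp Require Import all_classical all_reals all_analysis.
Set Implicit Arguments. Unset Strict Implicit. Unset Printing Implicit Defensive.
Import Order.TTheory GRing.Theory Num.Theory.
Local Open Scope ring_scope.

Section Defs.
Variable R : realType.

(* d = n^alpha, treated as an integer: d(n) = floor(n^alpha) *)
Definition dn (alpha : R) (n : nat) : nat := Num.truncn ((n%:R : R) `^ alpha).

Definition mn (alpha : R) (n : nat) : R := n%:R * ln ((dn alpha n)%:R).

Definition ff (k : nat) (alpha p : R) (n : nat) (s : R) : R :=
  let d : R := (dn alpha n)%:R in
  1 + p / (1 - p) * ((s ^+ k - d ^- k) / (1 - d ^- k)).

Definition BB (alpha : R) (n S : nat) : R :=
  let d : R := (dn alpha n)%:R in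
  ('C(n, S))%:R * (1 / d) ^+ S * (1 - 1 / d) ^+ (n - S).

Definition WW (k : nat) (alpha p r : R) (n S : nat) : R :=
  ff k alpha p n (S%:R / n%:R) `^ (r * mn alpha n).

Definition Phi (k : nat) (alpha p r : R) (n S : nat) : R :=
  BB alpha n S * WW k alpha p r n S.

Definition tau (p : R) : R := 1 / (1 - p).
Definition r_cr (p : R) : R := 1 / ln (tau p).

Definition alpha0 (k : nat) (alpha : R) : R :=
  ((2 * k - 1)%N%:R * alpha - 1) / (2 * (k - 1))%N%:R.

End Defs.

(* Main.v *)
Require Import Defs.
From mathcomp Require Import all_boot all_order all_algebra.
From mathcomp Require Import all_classical all_reals all_analysis.
From mathcomp Require Import ring lra.
Import Order.TTheory GRing.Theory Num.Theory.
Import numFieldNormedType.Exports.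
Local Open Scope classical_set_scope.
Local Open Scope ring_scope.


Lemma term_bound (R : realType) (k : nat) (alpha p r eta3 : R) (n S : nat) :
  (0 < k)%N -> 0 < p -> p < 1 -> 0 < r -> 0 < eta3 ->
  (0 < n)%N -> (S <= n)%N -> n%:R * eta3 <= S%:R ->
  2 <= (dn alpha n)%:R :> R -> 1 <= eta3 * (dn alpha n)%:R ->
  0 <= Phi k alpha p r n S <=
  'C(n, S)%:R * expR (- (n%:R * ((eta3 + r * ln (1 - p)) * ln (dn alpha n)%:R))).
Proof.
move=> k0 p0 p1 r0 e0 n0 Sn HS d2 ed.
rewrite /Phi /BB /WW /ff /mn.
set d : R := (dn alpha n)%:R in d2 ed *.
have dpos : 0 < d by lra.
have lnd : 0 <= ln d by apply: ln_ge0; lra.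
have npos : 0 < n%:R :> R by rewrite ltr0n.
have ip : 0 < d^-1 by rewrite invr_gt0.
have id1 : d^-1 <= 1/2.
  by rewrite -div1r ler_pdivrMr // mulrC -ler_pdivrMr //; lra.
set s : R := S%:R / n%:R.
have s1 : s <= 1 by rewrite /s ler_pdivrMr // mul1r ler_nat.
have se : eta3 <= s by rewrite /s ler_pdivlMr // mulrC.
have ed' : d^-1 <= eta3 by rewrite -(ler_pM2r dpos) mulVf //; lra.
have sd : d^-1 <= s by lra.
have s0 : 0 <= s by lra.
set e := d ^- k.
have eE : e = d^-1 ^+ k by rewrite /e exprVn.
have e1 : e < 1 by rewrite eE exprn_ilt1; [rewrite -lt0n | lra | lra].
have e0' : 0 < e by rewrite eE exprn_gt0.
have esk : e <= s ^+ k by rewrite eE; apply: lerXn2r; rewrite ?nnegrE; lra.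
have sk1 : s ^+ k <= 1 by rewrite exprn_ile1.
set q := p / (1 - p).
have q0 : 0 < q by rewrite /q divr_gt0 //; lra.
set fr := (s ^+ k - e) / (1 - e).
have fr0 : 0 <= fr by rewrite /fr divr_ge0 //; lra.
have fr1 : fr <= 1 by rewrite /fr ler_pdivrMr; lra.
have f1 : 1 <= 1 + q * fr by have := mulr_ge0 (ltW q0) fr0; lra.
have fq : 1 + q * fr <= 1 + q by have := ler_wpM2l (ltW q0) fr1; lra.
have qt : 1 + q = (1 - p)^-1 by rewrite /q; field; lra.
have lnt : ln (1 + q) = - ln (1 - p).
  by rewrite qt lnV // posrE; lra.
have lnf : ln (1 + q * fr) <= ln (1 + q).
  by rewrite ler_ln ?posrE //; lra.
have rm0 : 0 <= r * (n%:R * ln d) by apply: mulr_ge0; [lra| apply: mulr_ge0; lra].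
have W1 : (1 + q * fr) `^ (r * (n%:R * ln d)) <= expR (r * (n%:R * ln d) * - ln (1 - p)).
  rewrite /powR gt_eqF; last lra.
  by rewrite ler_expR -lnt ler_wpM2l.
have W0 : 0 <= (1 + q * fr) `^ (r * (n%:R * ln d)) by apply: powR_ge0.
have B1 : (1 - 1 / d) ^+ (n - S) <= 1 by apply: exprn_ile1; rewrite div1r; lra.
have B0 : 0 <= (1 - 1 / d) ^+ (n - S) by apply: exprn_ge0; rewrite div1r; lra.
have A1 : (1 / d) ^+ S <= expR (- (n%:R * eta3 * ln d)).
  have -> : 1 / d = expR (- ln d) by rewrite expRN lnK ?div1r // posrE.
  rewrite -expRM_natl ler_expR mulrN lerN2 ler_wpM2r //.
have A0 : 0 <= (1 / d) ^+ S by apply: exprn_ge0; rewrite div1r; lra.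
have C0 : 0 <= 'C(n, S)%:R :> R by [].
apply/andP; split.
  by apply: mulr_ge0 => //; apply: mulr_ge0 => //; apply: mulr_ge0.
have -> : - (n%:R * ((eta3 + r * ln (1 - p)) * ln d)) =
   - (n%:R * eta3 * ln d) + r * (n%:R * ln d) * - ln (1 - p) by ring.
rewrite expRD.
have L1 : 'C(n, S)%:R * (1 / d) ^+ S * (1 - 1 / d) ^+ (n - S) <=
          'C(n, S)%:R * expR (- (n%:R * eta3 * ln d)).
  rewrite -mulrA; apply: ler_wpM2l => //.
  rewrite -[X in _ <= X]mulr1.
  exact: (ler_pM A0 B0 A1 B1).
have X0 : 0 <= 'C(n, S)%:R * (1 / d) ^+ S * (1 - 1 / d) ^+ (n - S).
  by apply: mulr_ge0 => //; apply: mulr_ge0.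
apply: le_trans (ler_pM X0 W0 L1 W1) _.
by rewrite -!mulrA.
Qed.

Lemma sum_bound (R : realType) (k : nat) (alpha p r eta3 : R) (n : nat) :
  (0 < k)%N -> 0 < p -> p < 1 -> 0 < r -> 0 < eta3 -> (0 < n)%N ->
  2 <= (dn alpha n)%:R :> R -> 1 <= eta3 * (dn alpha n)%:R ->
  expR (- ((eta3 + r * ln (1 - p)) * ln (dn alpha n)%:R)) <= 1/4 ->
  0 <= \sum_(0 <= S < n.+1 | n%:R * eta3 <= S%:R) Phi k alpha p r n S <= (1/2) ^+ n.
Proof.
move=> k0 p0 p1 r0 e0 n0 d2 ed E4.
set E := expR (- (n%:R * ((eta3 + r * ln (1 - p)) * ln (dn alpha n)%:R))).
have E0 : 0 <= E by apply: expR_ge0.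
rewrite big_mkord.
have TB : forall i : 'I_n.+1, n%:R * eta3 <= i%:R ->
   0 <= Phi k alpha p r n i <= 'C(n, i)%:R * E.
  move=> i Hi; apply: term_bound => //.
  by rewrite -ltnS.
apply/andP; split.
  by apply: sumr_ge0 => i Hi; have /andP[] := TB i Hi.
apply: (@le_trans _ _ (\sum_(i < n.+1 | n%:R * eta3 <= i%:R) 'C(n, i)%:R * E)).
  by apply: ler_sum => i Hi; have /andP[] := TB i Hi.
apply: (@le_trans _ _ (\sum_(i < n.+1) 'C(n, i)%:R * E)).
  rewrite [X in _ <= X](bigID (fun i : 'I_n.+1 => n%:R * eta3 <= i%:R)) /=.
  rewrite lerDl; apply: sumr_ge0 => i _; apply: mulr_ge0 => //.
rewrite -mulr_suml.
have -> : \sum_(i < n.+1) 'C(n, i)%:R = (2 : R) ^+ n.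
  have H2 : (1 + 1 : R) = 2 by lra.
  have := exprD1n (1 : R) n; rewrite H2 => ->.
  by apply: eq_bigr => i _; rewrite expr1n.
have -> : E = expR (- ((eta3 + r * ln (1 - p)) * ln (dn alpha n)%:R)) ^+ n.
  by rewrite /E -expRM_natl mulrN.
rewrite -exprMn; apply: lerXn2r; rewrite ?nnegrE.
- by apply: mulr_ge0 => //; apply: expR_ge0.
- lra.
- have := ler_wpM2l (ler0n R 2) E4; lra.
Qed.

Lemma dn_large (R : realType) (alpha D : R) : 0 < alpha -> 0 <= D ->
  exists N : nat, forall n, (N <= n)%N -> D < (dn alpha n)%:R.
Proof.
move=> a0 D0.
set x := (D + 1) `^ alpha^-1.
have x0 : 0 <= x by apply: powR_ge0.
exists (Num.truncn x).+1 => n Hn.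
have /andP[_ Hx] := truncn_itv x0.
have nx : x <= n%:R.
  apply: le_trans (ltW Hx) _; by rewrite ler_nat.
have np : D + 1 <= n%:R `^ alpha.
  have -> : D + 1 = x `^ alpha.
    by rewrite /x -powRrM mulVf ?gt_eqF // powRr1 //; lra.
  by apply: ge0_ler_powR; rewrite ?nnegrE //; lra.
rewrite /dn.
have n0 : 0 <= n%:R `^ alpha by apply: powR_ge0.
have /andP[_ Hd] := truncn_itv n0.
move: Hd; rewrite -addn1 natrD; lra.
Qed.

Theorem lemma4p10 (R : realType) (k : nat) (alpha r p eta2 eta3 mu : R) :
  (2 <= k)%N -> 0 < alpha -> 0 < r -> 0 < p -> p < 1 ->
  (2 * k - 1)%N%:R * alpha > 1 ->
  k%:R * alpha <= 1 ->
  k%:R >= tau p * ln (tau p) / (tau p - 1) ->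
  r < r_cr p ->
  0 < eta2 -> eta2 < eta3 -> eta3 < 1 ->
  alpha0 k alpha / alpha - mu * eta2 ^+ (k - 1) > 0 ->
  mu > k%:R * p * r / (1 - p) ->
  r * ln (1 - p) + eta3 > 0 ->
  (fun n : nat => \sum_(0 <= S < n.+1 | n%:R * eta3 <= S%:R)
                    Phi k alpha p r n S) @ \oo --> (0 : R).
Proof.
move=> k2 a0 r0 p0 p1 _ _ _ _ e2 e23 e3 _ _ Hc.
have k0 : (0 < k)%N by apply: leq_trans k2.
have e0 : 0 < eta3 by lra.
set c := eta3 + r * ln (1 - p).
have c0 : 0 < c by rewrite /c; lra.
set D := 2 + eta3^-1 + expR (ln 4 / c).
have ie : 0 < eta3^-1 by rewrite invr_gt0.
have eD : 0 < expR (ln 4 / c) by apply: expR_gt0.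
have D0 : 0 <= D by rewrite /D; lra.
have [N HN] := @dn_large R alpha D a0 D0.
apply: (squeeze_cvgr (f := fun _ => 0) (h := fun n : nat => (1/2 : R) ^+ n)).
- exists N.+1 => // n /= Hn.
  have Hd := HN n (leq_trans (leqnSn N) Hn).
  set d := (dn alpha n)%:R in Hd *.
  rewrite /D in Hd.
  have d2 : 2 <= d by lra.
  have ed : 1 <= eta3 * d.
    rewrite -(ler_pM2l ie) mulr1 mulrA mulVf ?gt_eqF // mul1r; lra.
  have E4 : expR (- (c * ln d)) <= 1/4.
    have lnd : ln 4 / c <= ln d.
      rewrite -[X in X <= _]expRK ler_ln ?posrE //; lra.
    have : ln 4 <= c * ln d by rewrite mulrC -ler_pdivrMr.
    move=> H; rewrite div1r -[4 in X in _ <= X]lnK ?posrE // -expRN ler_expR; lra.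
  apply: sum_bound => //.
  by apply: leq_trans Hn.
- exact: cvg_cst.
- apply: cvg_expr; rewrite ger0_norm; lra.
Qed.
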